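(* Let $\Bbbk$ be a field, $A$ a $\Bbbk$-algebra, $\Gamma$ a subalgebra, $\sim$ an equivalence relation on $\mathrm{cfs}(\Gamma)$, and suppose $\Gamma$ is a Harish-Chandra block subalgebra of $A$ with respect to $\sim$. Let $V$ be an $A$-module and $\mathcal D\subseteq\mathrm{cfs}(\Gamma)/{\sim}$. Then $$A.\Big(\bigoplus_{B\in\mathcal D}V(B)\Big)\subseteq\bigoplus_{C\succ\mathcal D}V(C),$$ where $C\succ\mathcal D$ means $B\prec C$ for some $B\in\mathcal D$.
   Context: $\mathrm{cfs}(\Gamma)$: maximal two-sided ideals $\mathfrak m$ of $\Gamma$ with $\dim\Gamma/\mathfrak m<\infty$. For a class $B$, $\mathcal W(B)=\{\mathfrak m_1\cdots\mathfrak m_k:k\ge0,\mathfrak m_i\in B\}$. For a $\Gamma$-module $V$, $V(B)=\{v\in V:\mathfrak m v=0$ for some $\mathfrak m\in\mathcal W(B)\}$ (the sum of these is direct); $V$ is a block module if $V=\bigoplus_B V(B)$, and $\mathrm{Supp}(V)=\{B:V(B)\ne0\}$. $\Gamma$ is a Harish-Chandra block subalgebra of $A$ if $A/A\mathfrak m$ is a block module over $\Gamma$ for every $B$ and $\mathfrak m\in\mathcal W(B)$. $\prec$ is the preorder on $\mathrm{cfs}(\Gamma)/{\sim}$ generated by $B\prec C$ whenever $C\in\mathrm{Supp}(A/A\mathfrak m)$ for some $\mathfrak m\in B$. *)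

(* Defs.v *)
From HB Require Import structures.
From mathcomp Require Import all_boot all_order all_algebra.
From Stdlib Require List Relations.
Set Implicit Arguments. Unset Strict Implicit. Unset Printing Implicit Defensive.
Import GRing.Theory.
Local Open Scope ring_scope.

Section Defs.
Variables (k : fieldType) (A : algType k).

Definition subset_A := A -> Prop.
Definition cls := subset_A -> Prop.

Definition subalgebra (G : subset_A) : Prop :=
  [/\ G 1, G 0, (forall x y, G x -> G y -> G (x + y)),
      (forall x y, G x -> G y -> G (x * y)) & (forall (c : k) x, G x -> G (c *: x))].

Definition ideal_of (G m : subset_A) : Prop :=
  [/\ (forall x, m x -> G x), m 0, (forall x y, m x -> m y -> m (x + y)),
      (forall g x, G g -> m x -> m (g * x)) & (forall g x, G g -> m x -> m (x * g))].

Definition maximal_ideal (G m : subset_A) : Prop :=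
  [/\ ideal_of G m, (exists g, G g /\ ~ m g) &
      (forall J, ideal_of G J -> (forall x, m x -> J x) ->
         (forall x, J x <-> m x) \/ (forall x, J x <-> G x))].

(* dim Gamma/m < oo : finitely many elements of Gamma span Gamma modulo m *)
Definition finite_codim (G m : subset_A) : Prop :=
  exists s : seq A, List.Forall G s /\
    forall g, G g -> exists cs : seq k, size cs = size s /\
      m (g - \sum_(i < size s) cs`_i *: s`_i).

Definition cfs (G : subset_A) (m : subset_A) : Prop :=
  maximal_ideal G m /\ finite_codim G m.

Definition equiv_on (P : subset_A -> Prop) (sim : subset_A -> subset_A -> Prop) : Prop :=
  [/\ (forall m, P m -> sim m m),
      (forall m n, P m -> P n -> sim m n -> sim n m) &
      (forall m n p, P m -> P n -> P p -> sim m n -> sim n p -> sim m p)].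

Definition is_class (G : subset_A) (sim : subset_A -> subset_A -> Prop) (B : cls) : Prop :=
  exists m, cfs G m /\ forall n, B n <-> (cfs G n /\ sim m n).

(* product of ideals m_1 ... m_k of Gamma (the empty product is Gamma) *)
Fixpoint ideal_prod (G : subset_A) (ms : seq subset_A) : subset_A :=
  match ms with
  | [::] => G
  | m :: ms' => fun x => exists s : seq (A * A),
      List.Forall (fun p => m p.1 /\ ideal_prod G ms' p.2) s /\
      x = \sum_(p <- s) p.1 * p.2
  end.

Definition left_span (m : subset_A) : subset_A :=
  fun x => exists s : seq (A * A), List.Forall (fun p => m p.2) s /\
      x = \sum_(p <- s) p.1 * p.2.

Section QuotModule.
(* A Gamma-module presented as a quotient M/N, with Gamma acting through act;
   elements of M/N are represented by elements of M, N is the zero class. *)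
Variables (G : subset_A) (sim : subset_A -> subset_A -> Prop).
Variables (M : zmodType) (act : A -> M -> M) (N : M -> Prop).

(* v in (M/N)(B): annihilated by some ideal in W(B) *)
Definition part (B : cls) (v : M) : Prop :=
  exists ms : seq subset_A, List.Forall B ms /\
    forall x, ideal_prod G ms x -> N (act x v).

Definition in_sum_parts (P : cls -> Prop) (v : M) : Prop :=
  exists s : seq (cls * M), List.Forall (fun p => P p.1 /\ part p.1 p.2) s /\
    N (v - \sum_(p <- s) p.2).

Definition block_module : Prop :=
  forall v, in_sum_parts (is_class G sim) v.

Definition supp (C : cls) : Prop :=
  is_class G sim C /\ exists v, part C v /\ ~ N v.
End QuotModule.

Definition AmodAm_block (G : subset_A) sim (m : subset_A) : Prop :=
  block_module G sim (fun x (a : A) => x * a) (left_span m).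

Definition HC_block_subalgebra (G : subset_A) sim : Prop :=
  forall B, is_class G sim B ->
    forall ms : seq subset_A, List.Forall B ms -> AmodAm_block G sim (ideal_prod G ms).

Definition prec_step (G : subset_A) sim (B C : cls) : Prop :=
  is_class G sim B /\
  exists m, B m /\ supp G sim (fun x (a : A) => x * a) (left_span m) C.

Definition prec (G : subset_A) sim : cls -> cls -> Prop :=
  Relation_Operators.clos_refl_trans cls (prec_step G sim).

Definition is_Amodule (V : lmodType k) (act : A -> V -> V) : Prop :=
  [/\ (forall a u v, act a (u + v) = act a u + act a v),
      (forall a (c : k) v, act a (c *: v) = c *: act a v),
      (forall a b v, act (a + b) v = act a v + act b v) &
      (forall (c : k) a v, act (c *: a) v = c *: act a v)] /\
  (forall v, act 1 v = v) /\
      (forall a b v, act (a * b) v = act a (act b v)).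

End Defs.

(* Main.v *)
Require Import Defs.
From HB Require Import structures.
From mathcomp Require Import all_boot all_order all_algebra.
From Stdlib Require List Relations.
From Stdlib Require Import Classical FunctionalExtensionality PropExtensionality.
Local Open Scope ring_scope.

Module Helpers.
Set Implicit Arguments. Unset Strict Implicit. Unset Printing Implicit Defensive.
Import GRing.Theory.

Lemma forall_sum (T : Type) (M : zmodType) (P : M -> Prop) (Q : T -> Prop)
  (F : T -> M) (s : seq T) :
  P 0 -> (forall x y, P x -> P y -> P (x + y)) -> (forall t, Q t -> P (F t)) ->
  List.Forall Q s -> P (\sum_(t <- s) F t).
Proof.
move=> P0 PD PF; elim: s => [|t s IH] H; first by rewrite big_nil.
inversion H; subst; rewrite big_cons; apply: PD; [exact: PF | exact: IH].
Qed.

Section Gen.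
Variables (k : fieldType) (A : algType k) (G : A -> Prop).
Variables (M : zmodType) (act : A -> M -> M) (N : M -> Prop).
Hypotheses (N0 : N 0) (ND : forall x y, N x -> N y -> N (x + y))
  (NN : forall x, N x -> N (- x)).

Lemma isp_N P v : N v -> in_sum_parts G act N P v.
Proof. by move=> Nv; exists [::]; split => //; rewrite big_nil subr0. Qed.

Lemma isp_add P v w : in_sum_parts G act N P v -> in_sum_parts G act N P w ->
  in_sum_parts G act N P (v + w).
Proof.
move=> [s1 [F1 N1]] [s2 [F2 N2]]; exists (s1 ++ s2); split.
  by apply/List.Forall_app.
by rewrite big_cat /= opprD addrACA; apply: ND.
Qed.

Lemma isp_part (P : cls A -> Prop) C v : P C -> part G act N C v -> in_sum_parts G act N P v.
Proof.
move=> PC pv; exists [:: (C, v)]; split; first by constructor => //.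
by rewrite big_seq1 subrr.
Qed.

Lemma isp_sum (T : Type) P (Q : T -> Prop) (F : T -> M) s :
  (forall t, Q t -> in_sum_parts G act N P (F t)) -> List.Forall Q s ->
  in_sum_parts G act N P (\sum_(t <- s) F t).
Proof.
move=> HF; apply: forall_sum => //; [exact: isp_N | exact: isp_add].
Qed.

Lemma part_monoN (N' : M -> Prop) C v : (forall x, N x -> N' x) ->
  part G act N C v -> part G act N' C v.
Proof. by move=> HN [ms [F H]]; exists ms; split => // x /H /HN. Qed.
End Gen.

Section LS.
Variables (k : fieldType) (A : algType k).
Implicit Types X Y : A -> Prop.

Lemma ls0 X : left_span X 0.
Proof. by exists [::]; rewrite big_nil. Qed.

Lemma lsD X x y : left_span X x -> left_span X y -> left_span X (x + y).
Proof.
move=> [s1 [F1 ->]] [s2 [F2 ->]]; exists (s1 ++ s2); split.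
  by apply/List.Forall_app.
by rewrite big_cat.
Qed.

Lemma lsM X b x : left_span X x -> left_span X (b * x).
Proof.
move=> [s [F ->]]; exists (map (fun p => (b * p.1, p.2)) s); split.
  by apply/List.Forall_map; apply: List.Forall_impl F.
by rewrite big_map mulr_sumr; apply: eq_bigr => p _; rewrite mulrA.
Qed.

Lemma lsN X x : left_span X x -> left_span X (- x).
Proof. by move=> H; rewrite -mulN1r; apply: lsM. Qed.

Lemma lsB X x y : left_span X x -> left_span X y -> left_span X (x - y).
Proof. by move=> Hx Hy; apply: lsD => //; apply: lsN. Qed.

Lemma ls_in X y : X y -> left_span X y.
Proof.
by move=> Hy; exists [:: (1, y)]; split; [constructor | rewrite big_seq1 mul1r].
Qed.

Lemma ls_mono X Y x : (forall y, X y -> left_span Y y) -> left_span X x -> left_span Y x.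
Proof.
move=> HXY [s [F ->]]; apply: forall_sum F.
- exact: ls0.
- exact: lsD.
- by move=> p Hp; apply: lsM; apply: HXY.
Qed.
End LS.

Lemma zid (M : zmodType) (a b c d : M) : a = (b + c - d) + (a - c - (b - d)).
Proof. by rewrite -[a - c - _]addrA -opprD [c + (b - d)]addrA [c + b]addrC [_ + (a - _)]addrC subrK. Qed.

Section Ideals.
Variables (k : fieldType) (A : algType k) (G : A -> Prop).
Hypothesis hG : subalgebra G.

Lemma G1 : G 1. Proof. by case: hG. Qed.
Lemma G0 : G 0. Proof. by case: hG. Qed.
Lemma GD x y : G x -> G y -> G (x + y). Proof. by case: hG => _ _ H _ _; apply: H. Qed.
Lemma GM x y : G x -> G y -> G (x * y). Proof. by case: hG => _ _ _ H _; apply: H. Qed.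
Lemma GN1 : G (-1).
Proof. by case: hG => H1 _ _ _ H; rewrite -scaleN1r; apply: H. Qed.

Lemma idealN m x : ideal_of G m -> m x -> m (- x).
Proof. by case=> _ _ _ H _ mx; rewrite -mulN1r; apply: H => //; apply: GN1. Qed.

Lemma ideal_G : ideal_of G G.
Proof. split => //; [exact: G0 | exact: GD | exact: GM | by move=> g x ? ?; apply: GM]. Qed.

Lemma ip_ideal ms : List.Forall (ideal_of G) ms -> ideal_of G (ideal_prod G ms).
Proof.
elim: ms => [|m ms IH] H; first exact: ideal_G.
inversion H as [|? ? Hm Hms]; subst.
have [PG P0 PD PL PR] := IH Hms.
case: Hm => [mG m0 mD mL mR].
split => /=.
- move=> x [s [F ->]]; apply: forall_sum F; [exact: G0 | exact: GD |].
  by move=> p [/mG ? /PG ?]; apply: GM.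
- by exists [::]; rewrite big_nil.
- move=> x y [s1 [F1 ->]] [s2 [F2 ->]]; exists (s1 ++ s2); split.
    by apply/List.Forall_app.
  by rewrite big_cat.
- move=> g x Hg [s [F ->]]; exists (map (fun p => (g * p.1, p.2)) s); split.
    apply/List.Forall_map; apply: List.Forall_impl F => p [? ?]; split => //.
    exact: mL.
  by rewrite big_map mulr_sumr; apply: eq_bigr => p _; rewrite mulrA.
- move=> g x Hg [s [F ->]]; exists (map (fun p => (p.1, p.2 * g)) s); split.
    apply/List.Forall_map; apply: List.Forall_impl F => p [? ?]; split => //.
    exact: PR.
  by rewrite big_map mulr_suml; apply: eq_bigr => p _; rewrite mulrA.
Qed.

Lemma cfs_ideal m : cfs G m -> ideal_of G m.
Proof. by case=> [[]]. Qed.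

Definition comax (I J : A -> Prop) := exists i j, I i /\ J j /\ 1 = i + j.

Lemma comax_sym I J : comax I J -> comax J I.
Proof. by move=> [i [j [? [? E]]]]; exists j, i; rewrite addrC. Qed.

Lemma comax_single m n : cfs G m -> cfs G n -> ~ (forall x, m x <-> n x) -> comax m n.
Proof.
move=> [[im [g [Gg nmg]] maxm] _] [[in_ _ maxn] _] ne.
have [mG m0 mD mL mR] := im.
have [nG n0 nD nL nR] := in_.
pose J x := exists e h, m e /\ n h /\ x = e + h.
have iJ : ideal_of G J.
  split.
  - by move=> x [e [h [me [nh ->]]]]; apply: GD; [apply: mG | apply: nG].
  - by exists 0, 0; rewrite addr0.
  - move=> x y [e [h [me [nh ->]]]] [e' [h' [me' [nh' ->]]]].
    by exists (e + e'), (h + h'); rewrite addrACA; split; [apply: mD | split; [apply: nD|]].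
  - move=> g' x Hg [e [h [me [nh ->]]]]; exists (g' * e), (g' * h).
    by rewrite mulrDr; split; [apply: mL | split; [apply: nL|]].
  - move=> g' x Hg [e [h [me [nh ->]]]]; exists (e * g'), (h * g').
    by rewrite mulrDl; split; [apply: mR | split; [apply: nR|]].
have mJ : forall x, m x -> J x by move=> x mx; exists x, 0; rewrite addr0.
case: (maxm J iJ mJ) => HJ; last first.
  have := (proj2 (HJ 1) G1) => [[e [h [me [nh E]]]]].
  by exists e, h.
have nm : forall x, n x -> m x by move=> x nx; apply/HJ; exists 0, x; rewrite add0r.
case: (maxn m im nm) => Hm.
  by exfalso; apply: ne => x; split => [/Hm|/Hm].
by exfalso; apply: nmg; apply/Hm.
Qed.

Lemma comax_prod I ms : ideal_of G I -> List.Forall (ideal_of G) ms ->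
  List.Forall (comax I) ms -> comax I (ideal_prod G ms).
Proof.
move=> iI; case: (iI) => [IG I0 ID IL IR].
elim: ms => [|m ms IH] Hi Hc.
  by exists 0, 1; rewrite add0r; split => //; split => //; apply: G1.
inversion Hi as [|? ? Hm Hms]; inversion Hc as [|? ? Cm Cms]; subst.
have [i1 [y [Ii1 [my E1]]]] := Cm.
have [i2 [p [Ii2 [Pp E2]]]] := IH Hms Cms.
exists (i1 + i2 - i1 * i2), (y * p); split.
  eapply ID; first by eapply ID; eassumption.
  by apply: (idealN iI); apply: IR => //; apply: IG.
split.
  by exists [:: (y, p)]; split; [constructor | rewrite big_seq1].
have -> : y = 1 - i1 by rewrite E1 addrC addKr.
have -> : p = 1 - i2 by rewrite E2 addrC addKr.
rewrite mulrBl !mulrBr !mul1r !mulr1.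
exact: zid.
Qed.
End Ideals.

Section Classes.
Variables (k : fieldType) (A : algType k) (G : A -> Prop)
  (sim : (A -> Prop) -> (A -> Prop) -> Prop).
Hypotheses (hG : subalgebra G) (hsim : equiv_on (cfs G) sim).

Lemma class_cfs C n : is_class G sim C -> C n -> cfs G n.
Proof. by move=> [m [_ H]] /H []. Qed.

Lemma class_ideals C ms : is_class G sim C -> List.Forall C ms ->
  List.Forall (ideal_of G) ms.
Proof.
move=> hC H; apply: List.Forall_impl H => n Cn; apply: cfs_ideal.
exact: class_cfs hC Cn.
Qed.

Lemma class_eq C D : is_class G sim C -> is_class G sim D ->
  (exists n, C n /\ D n) -> C = D.
Proof.
move=> [m1 [c1 H1]] [m2 [c2 H2]] [n [/H1 [cn s1] /H2 [_ s2]]].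
case: hsim => _ Hsym Htr.
apply: functional_extensionality => x; apply: propositional_extensionality.
rewrite H1 H2; split=> [[cx sx]|[cx sx]]; split => //.
- apply: (Htr m2 m1 x) => //; apply: (Htr m2 n m1) => //.
  exact: Hsym.
- apply: (Htr m1 m2 x) => //; apply: (Htr m1 n m2) => //.
  exact: Hsym.
Qed.

Lemma disj_comax C D ms ns : is_class G sim C -> is_class G sim D ->
  ~ (exists n, C n /\ D n) -> List.Forall C ms -> List.Forall D ns ->
  comax (ideal_prod G ms) (ideal_prod G ns).
Proof.
move=> hC hD dis Fm Fn.
have single : forall m, C m -> comax m (ideal_prod G ns).
  move=> m Cm; apply: (comax_prod hG).
  - exact: cfs_ideal (class_cfs hC Cm).
  - exact: class_ideals Fn.
  apply/List.Forall_forall => n /(proj1 (List.Forall_forall _ _) Fn) Dn.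
  apply: (comax_single hG); [exact: class_cfs hC Cm | exact: class_cfs hD Dn |].
  move=> E; apply: dis; exists m; split => //.
  have -> : m = n => //.
  apply: functional_extensionality => x; apply: propositional_extensionality.
  exact: E.
apply: comax_sym; apply: (comax_prod hG).
- by apply: ip_ideal => //; apply: class_ideals Fn.
- exact: class_ideals Fm.
apply/List.Forall_forall => m /(proj1 (List.Forall_forall _ _) Fm) Cm.
exact: comax_sym (single m Cm).
Qed.

Notation amul := (fun x (a : A) => x * a).

Lemma part_mulG (N : A -> Prop) D g c : is_class G sim D -> G g ->
  part G amul N D c -> part G amul N D (g * c).
Proof.
move=> hD Gg [ms [F H]]; exists ms; split => // x Hx.
rewrite mulrA; apply: H.
by case: (ip_ideal hG (class_ideals hD F)) => _ _ _ _ R; apply: R.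
Qed.

Lemma sep K C a s : is_class G sim C -> part G amul (left_span K) C a ->
  List.Forall (fun p => is_class G sim p.1 /\ ~ (exists n, C n /\ p.1 n) /\
                  part G amul (left_span K) p.1 p.2) s ->
  forall g, G g -> left_span K (g * a - g * \sum_(p <- s) p.2) ->
  left_span K (g * a).
Proof.
move=> hC pa; elim: s => [|[D c] s IH] Fs g Gg.
  by rewrite big_nil mulr0 subr0.
inversion Fs as [|? ? [hD [dis pc]] Fs']; subst.
rewrite big_cons /= => H.
have [ns [Fns Hns]] := pa.
have [ns' [Fns' Hns']] := pc.
have [e [h [en [hn E]]]] := disj_comax hC hD dis Fns Fns'.
have [IG _ _ _ IR] := ip_ideal hG (class_ideals hC Fns).
have [IG' _ _ _ IR'] := ip_ideal hG (class_ideals hD Fns').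
have Gh : G h by apply: IG'.
rewrite -[g * a]mul1r E mulrDl; apply: lsD.
  by rewrite mulrA; apply: Hns; apply: IR.
rewrite mulrA; apply: IH => //; first by apply: GM.
have -> : h * g * a - h * g * (\sum_(p <- s) p.2) =
          h * (g * a - g * (c + \sum_(p <- s) p.2)) + h * g * c.
  by rewrite mulrBr [g * (c + _)]mulrDr mulrDr !mulrA opprD addrA addrAC subrK.
apply: lsD; first exact: lsM.
by apply: Hns'; apply: IR'.
Qed.
End Classes.

Section Lsec.
Variables (k : fieldType) (A : algType k) (G : A -> Prop)
  (sim : (A -> Prop) -> (A -> Prop) -> Prop).
Hypotheses (hG : subalgebra G) (hsim : equiv_on (cfs G) sim)
  (hHC : HC_block_subalgebra G sim).

Notation amul := (fun x (a : A) => x * a).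

Lemma ip1_sub_ls m x : ideal_of G m -> left_span (ideal_prod G [:: m]) x ->
  left_span m x.
Proof.
move=> [mG m0 mD mL mR]; apply: ls_mono => y [s [F ->]]; apply: ls_in.
apply: forall_sum F => //.
by move=> p [mp Gp]; apply: mR.
Qed.

Lemma Rlem m ms r p : left_span m r -> ideal_prod G ms p ->
  left_span (ideal_prod G (m :: ms)) (r * p).
Proof.
move=> [s [F ->]] Pp; rewrite mulr_suml; apply: forall_sum F.
- exact: ls0.
- exact: lsD.
move=> q mq; rewrite -mulrA; apply: lsM; apply: ls_in.
by exists [:: (q.2, p)]; split; [constructor | rewrite big_seq1].
Qed.

Lemma BP B m ms b p : is_class G sim B -> B m -> List.Forall B ms ->
  ideal_prod G ms p ->
  in_sum_parts G amul (left_span (ideal_prod G (m :: ms)))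
    (fun D => is_class G sim D /\ prec G sim B D) (b * p).
Proof.
move=> hB Bm Fms Pp.
have im : ideal_of G m := cfs_ideal (class_cfs hB Bm).
have Fm : List.Forall B [:: m] by constructor.
have [s [Fs Ns]] := hHC hB Fm b.
have -> : b * p = (b - \sum_(q <- s) q.2) * p + \sum_(q <- s) q.2 * p.
  by rewrite mulrBl -mulr_suml subrK.
apply: isp_add; first exact: lsD.
  apply: isp_N.
  by apply: Rlem => //; apply: ip1_sub_ls.
apply: isp_sum Fs; [exact: ls0 | exact: lsD |].
move=> [C c] [hC pc] /=.
case: (classic (left_span m c)) => Hc.
  by apply: isp_N; apply: Rlem.
apply: (isp_part (C:=C) (v:=c * p) (ls0 _)); first split => //.
  apply: (@Relation_Operators.rt_step _ (prec_step G sim)); split => //; exists m; split => //.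
  split => //; exists c; split => //.
  apply: part_monoN pc => x; exact: ip1_sub_ls.
have [ns [Fns Hns]] := pc.
exists ns; split => // x Hx; rewrite mulrA; apply: Rlem => //.
exact: ip1_sub_ls (Hns x Hx).
Qed.

Lemma Llem B ms : is_class G sim B -> List.Forall B ms ->
  forall a C, is_class G sim C ->
  part G amul (left_span (ideal_prod G ms)) C a ->
  ~ left_span (ideal_prod G ms) a -> prec G sim B C.
Proof.
move=> hB; elim: ms => [|m ms IH] Fms a C hC pa na.
  by exfalso; apply: na; rewrite -[a]mulr1; apply: lsM; apply: ls_in; apply: G1.
inversion Fms as [|? ? Bm Fms']; subst.
set K := ideal_prod G (m :: ms).
set P := ideal_prod G ms.
case: (classic (left_span P a)) => HP; last first.
  apply: (IH Fms' a C hC) => //; apply: part_monoN pa => x.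
  apply: ls_mono => y [s [F ->]].
  by exists s; split => //; apply: List.Forall_impl F => q [].
have Sa : in_sum_parts G amul (left_span K)
    (fun D => is_class G sim D /\ prec G sim B D) a.
  case: HP => s [F ->]; apply: isp_sum F; [exact: ls0 | exact: lsD |].
  by move=> q Pq; apply: BP.
case: Sa => s [Fs Ns].
case: (classic (exists q, List.In q s /\ exists n, C n /\ q.1 n)) => [[q [Iq sh]]|nsh].
  have [[hq pq] _] := proj1 (List.Forall_forall _ _) Fs q Iq.
  by rewrite (class_eq hsim hC hq sh).
exfalso; apply: na; rewrite -[a]mul1r.
apply: (sep (s:=s) hG hC pa _ (G1 hG)); rewrite ?mul1r //.
apply/List.Forall_forall => q Iq.
have [[hq pq] ppq] := proj1 (List.Forall_forall _ _) Fs q Iq.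
split => //; split => // sh; apply: nsh; by exists q.
Qed.
End Lsec.
End Helpers.
Import Helpers.
Import GRing.Theory.
Theorem mainTheorem4 (k : fieldType) (A : algType k) (G : A -> Prop)
  (sim : (A -> Prop) -> (A -> Prop) -> Prop)
  (hG : subalgebra G) (hsim : equiv_on (cfs G) sim)
  (hHC : HC_block_subalgebra G sim)
  (V : lmodType k) (act : A -> V -> V) (hV : is_Amodule act)
  (D : cls A -> Prop) (hD : forall B, D B -> is_class G sim B) :
  forall (a : A) (v : V),
    in_sum_parts G act (fun w => w = 0) D v ->
    in_sum_parts G act (fun w => w = 0)
      (fun C => exists B, D B /\ prec G sim B C) (act a v).
Proof.
case: hV => [[addv scalev adda scalea] [act1 actM]].
have N0 : (0 : V) = 0 by [].
have ND : forall x y : V, x = 0 -> y = 0 -> x + y = 0 by move=> x y -> ->; rewrite addr0.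
have act_a0 : forall b, act b 0 = 0.
  move=> b; have := addv b 0 0; rewrite addr0 => /(congr1 (fun t => t - act b 0)).
  by rewrite subrr addrK => /esym.
have act_0v : forall w, act 0 w = 0.
  move=> w; have := adda 0 0 w; rewrite addr0 => /(congr1 (fun t => t - act 0 w)).
  by rewrite subrr addrK => /esym.
have act_subA : forall x y w, act (x - y) w = act x w - act y w.
  by move=> x y w; rewrite adda -[- y]scaleN1r scalea scaleN1r.
have act_ls : forall K r w, (forall x, K x -> act x w = 0) -> left_span K r -> act r w = 0.
  move=> K r w HK [s [F ->]].
  rewrite (big_morph (fun x => act x w) (fun x y => adda x y w) (act_0v w)).
  apply: (forall_sum (P := fun t : V => t = 0)) F;
    [by [] | by move=> x y -> ->; rewrite addr0 | by move=> p Hp; rewrite actM (HK _ Hp) act_a0].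
move=> a v [s [Fs Ns]].
have -> : v = \sum_(p <- s) p.2 by apply/eqP; rewrite -subr_eq0; apply/eqP.
rewrite (big_morph (act a) (addv a) (act_a0 a)).
apply: (isp_sum N0 ND) Fs => [[B w]] [DB [ms [Fms Hms]]] /=.
have hB := hD B DB.
set K := ideal_prod G ms.
have [s' [Fs' Ns']] := hHC B hB ms Fms a.
have -> : act a w = act (a - \sum_(q <- s') q.2) w + \sum_(q <- s') act q.2 w.
  by rewrite act_subA (big_morph (fun x => act x w) (fun x y => adda x y w) (act_0v w)) subrK.
apply: (isp_add ND).
  by apply: isp_N; apply: (act_ls K) => // x /Hms.
apply: (isp_sum N0 ND) Fs' => [[C c]] [hC pc] /=.
case: (classic (left_span K c)) => Hc.
  by apply: isp_N; apply: (act_ls K) => // x /Hms.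
apply: (isp_part (C:=C) N0).
  exists B; split => //; exact: (Llem hG hsim hHC hB Fms hC pc Hc).
have [ns [Fns Hns]] := pc.
exists ns; split => // x Hx; rewrite -actM.
by apply: (act_ls K) (Hns x Hx) => y /Hms.
Qed.
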